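(* Let $q\geq 5$ and $n\geq 1$ be integers, and let $c>0$ be a real number such that $k=\frac{n(q-1)}{2q}\bigl(\log (n(q-1))+c\bigr)$ is an integer. Then $$\Vert \nu_n^{*k}-\pi_n\Vert_{TV}^2\leq \frac14\left(e^{e^{-c}}-1\right).$$
   Context: For integers $n\geq1$, $q\geq2$, the Hamming scheme $H(n,q)$ is the graph with vertex set $X_n=\{0,1,\dots,q-1\}^n$ in which $x=(x_1,\dots,x_n)$ and $x'=(x'_1,\dots,x'_n)$ are adjacent ($x\sim x'$) iff $d(x,x'):=\#\{j: x_j\neq x'_j\}=1$. The simple random walk has transition probability $p_n(x,x')=\frac{1}{n(q-1)}$ if $x\sim x'$ and $0$ otherwise. Let $p_n^{(0)}(x,x')=\delta_{x,x'}$, $p_n^{(k)}(x,x')=\sum_{y\in X_n}p_n^{(k-1)}(x,y)p_n(y,x')$, let $x^{(0)}=(0,\dots,0)$, and let $\nu_n^{*k}(x)=p_n^{(k)}(x^{(0)},x)$ be the $k$-step distribution started at $x^{(0)}$. $\pi_n$ is the uniform probability measure on $X_n$. For measures $\mu,\nu$ on $X_n$, $\Vert\mu-\nu\Vert_{TV}=\max_{S\subset X_n}|\mu(S)-\nu(S)|$. *)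

(* Defs.v *)
From Stdlib Require Import Reals.
From mathcomp Require Import all_boot.
Set Implicit Arguments. Unset Strict Implicit. Unset Printing Implicit Defensive.

Local Open Scope R_scope.

Definition X (n q : nat) : finType := {ffun 'I_n -> 'I_q}.

Definition hdist (n q : nat) (x y : X n q) : nat := #|[set j | x j != y j]|.

Definition pn (n q : nat) (x y : X n q) : R :=
  if hdist x y == 1%N then / (INR n * (INR q - 1)) else 0.

Fixpoint pnk (n q : nat) (k : nat) (x y : X n q) : R :=
  match k with
  | O => if x == y then 1 else 0
  | S k' => \big[Rplus/0]_(z : X n q) (pnk k' x z * pn z y)
  end.

Definition x0 (n q : nat) (Hq : (0 < q)%N) : X n q := [ffun _ => Ordinal Hq].

Definition nu (n q : nat) (Hq : (0 < q)%N) (k : nat) (x : X n q) : R :=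
  pnk k (x0 n Hq) x.

Definition pi_unif (n q : nat) (x : X n q) : R := / INR #|X n q|.

Definition meas (T : finType) (mu : T -> R) (S : {set T}) : R :=
  \big[Rplus/0]_(x in S) mu x.

Definition TV (T : finType) (mu nu : T -> R) : R :=
  \big[Rmax/0]_(S : {set T}) Rabs (meas mu S - meas nu S).

(* Main.v *)
From HB Require Import structures.
Require Import Defs.
From Stdlib Require Import Reals Lra.
From mathcomp Require Import all_boot.
Set Implicit Arguments. Unset Strict Implicit. Unset Printing Implicit Defensive.
Local Open Scope R_scope.

Lemma RpA : associative Rplus. Proof. move=>*; ring. Qed.
Lemma RmA : associative Rmult. Proof. move=>*; ring. Qed.
HB.instance Definition _ := Monoid.isComLaw.Build R 0 Rplus RpA Rplus_comm Rplus_0_l.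
HB.instance Definition _ := Monoid.isComLaw.Build R 1 Rmult RmA Rmult_comm Rmult_1_l.
HB.instance Definition _ := Monoid.isMulLaw.Build R 0 Rmult Rmult_0_l Rmult_0_r.
HB.instance Definition _ := Monoid.isAddLaw.Build R Rmult Rplus Rmult_plus_distr_r Rmult_plus_distr_l.

Lemma sum_const_R (T : finType) (A : {pred T}) c :
  \big[Rplus/0]_(i in A) c = INR #|A| * c.
Proof. rewrite big_const; elim: #|A| => [|m IH]; first by simpl; ring. rewrite iterS IH S_INR; ring. Qed.

Lemma prod_const_R (T : finType) (A : {pred T}) c :
  \big[Rmult/1]_(i in A) c = c ^ #|A|.
Proof. rewrite big_const; elim: #|A| => [|m IH]; first by simpl; ring. rewrite iterS IH /=; ring. Qed.

Lemma sum1_R (T : finType) : \big[Rplus/0]_(i : T) 1 = INR #|T|.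
Proof. by rewrite sum_const_R Rmult_1_r. Qed.

Lemma sum_ind (T : finType) (x : T) (F : T -> R) :
  \big[Rplus/0]_a (if a == x then F a else 0) = F x.
Proof. by rewrite -big_mkcond big_pred1_eq. Qed.

Lemma sum_ite1 (T : finType) (x : T) A B :
  \big[Rplus/0]_(a : T) (if a == x then A else B) = A + (INR #|T| - 1) * B.
Proof.
rewrite (eq_bigr (fun a => (if a == x then A - B else 0) + B)); last first.
  by move=> a _; case: eqP => _; ring.
rewrite big_split /= sum_ind -sum1_R.
rewrite (eq_bigr (fun a => B * 1)); last by move=> *; ring.
rewrite -big_distrr /=; ring.
Qed.

Lemma sum_comp (T : finType) (x : T) (F : T -> R) :
  \big[Rplus/0]_a (if a == x then 0 else F a) = \big[Rplus/0]_a F a - F x.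
Proof.
rewrite -(sum_ind x F).
have -> : \big[Rplus/0]_a F a = \big[Rplus/0]_a ((if a == x then 0 else F a) + (if a == x then F a else 0)).
  by apply: eq_bigr => a _; case: eqP => _; ring.
rewrite big_split /=; ring.
Qed.

Definition gq (q : nat) (a : 'I_q) : R := if val a == 0%N then INR q - 1 else -1.
Definition G (q : nat) (bb : bool) (a : 'I_q) : R := if bb then gq a else 1.

Lemma gq_eq q (Hq : (0 < q)%N) (a : 'I_q) : gq a = if a == Ordinal Hq then INR q - 1 else -1.
Proof. by rewrite /gq -val_eqE. Qed.

Lemma sum_gq q (Hq : (0 < q)%N) : \big[Rplus/0]_(a : 'I_q) gq a = 0.
Proof.
rewrite (eq_bigr _ (fun a _ => gq_eq Hq a)) sum_ite1 card_ord; ring.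
Qed.

Lemma sum_gq2 q (Hq : (0 < q)%N) : \big[Rplus/0]_(a : 'I_q) (gq a * gq a) = INR q * (INR q - 1).
Proof.
rewrite (eq_bigr (fun a => if a == Ordinal Hq then (INR q - 1) * (INR q - 1) else 1)).
  by rewrite sum_ite1 card_ord; ring.
by move=> a _; rewrite gq_eq; case: eqP => _; ring.
Qed.

Lemma sum_G q (Hq : (0 < q)%N) bb : \big[Rplus/0]_(a : 'I_q) G bb a = if bb then 0 else INR q.
Proof. case: bb; rewrite /G ?sum_gq // sum1_R card_ord //. Qed.

Lemma sum_GG q (Hq : (0 < q)%N) bb bb' :
  \big[Rplus/0]_(a : 'I_q) (G bb a * G bb' a) =
  if bb then (if bb' then INR q * (INR q - 1) else 0) else (if bb' then 0 else INR q).
Proof.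
case: bb; case: bb'; rewrite /G ?sum_gq2 //.
- rewrite (eq_bigr (fun a => gq a)) ?sum_gq // => *; ring.
- rewrite (eq_bigr (fun a => gq a)) ?sum_gq // => *; ring.
- rewrite (eq_bigr (fun _ => 1)) ?sum1_R ?card_ord // => *; ring.
Qed.

Definition E (q : nat) (bb : bool) (a c : 'I_q) : R :=
  if bb then (if a == c then 0 else 1) else (if a == c then 1 else 0).

Lemma prodE n q (z y : X n q) (j : 'I_n) :
  \big[Rmult/1]_i E (i == j) (z i) (y i) =
  if [set i | z i != y i] == [set j] then 1 else 0.
Proof.
case: ifP => [/eqP HD | HD].
  move/setP: HD => HD.
  apply: big1 => i _.
  have := HD i; rewrite !inE => H.
  rewrite /E; case: (i == j) H => /= H.
    by rewrite (negbTE H).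
  by move/negbFE: H => ->.
case: (boolP [exists i, (z i != y i) != (i == j)]) => [/existsP [i Hi] | /existsPn H].
  rewrite (bigD1 i) //= /E.
  move: Hi; case: (i == j); case: (z i == y i) => //= _; ring.
move/negbT: HD; case/negP; apply/eqP/setP => i; rewrite !inE.
by have := H i; case: (z i != y i); case: (i == j).
Qed.

Lemma pn_eq n q (z y : X n q) :
  pn z y = / (INR n * (INR q - 1)) *
     \big[Rplus/0]_j \big[Rmult/1]_i E (i == j) (z i) (y i).
Proof.
rewrite (eq_bigr _ (fun j _ => prodE z y j)) /pn /hdist.
set D := [set i | z i != y i].
case: ifP => [/cards1P [j0 Hj0] | H1].
  rewrite (bigD1 j0) //= Hj0 eqxx big1; first ring.
  move=> j Hj; case: ifP => // /eqP H.
  have : j0 \in [set j] by rewrite -H inE.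
  by rewrite inE eq_sym (negbTE Hj).
rewrite big1; first ring.
move=> j _; case: ifP => // /eqP H.
by move: H1; rewrite H cards1.
Qed.

Definition phi n q (b : {ffun 'I_n -> bool}) (y : X n q) : R := \big[Rmult/1]_i G (b i) (y i).
Definition wn n (b : {ffun 'I_n -> bool}) : nat := #|[set i | b i]|.
Definition lam q n (b : {ffun 'I_n -> bool}) : R := 1 - INR (wn b) * INR q / (INR n * (INR q - 1)).

Lemma sum_ite_b n (b : {ffun 'I_n -> bool}) x y :
  \big[Rplus/0]_j (if b j then x else y) = INR n * y + (x - y) * INR (wn b).
Proof.
rewrite (eq_bigr (fun j => y + (if b j then x - y else 0))); last first.
  by move=> j _; case: (b j); ring.
rewrite big_split /= -big_mkcond /=.
have -> : \big[Rplus/0]_(j | b j) (x - y) = \big[Rplus/0]_(j in [set i | b i]) (x - y).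
  by apply: eq_bigl => j; rewrite inE.
rewrite !sum_const_R card_ord /wn; ring.
Qed.

Lemma eigen n q (Hq : (1 < q)%N) (Hn : (0 < n)%N) (b : {ffun 'I_n -> bool}) (y : X n q) :
  \big[Rplus/0]_(z : X n q) (phi b z * pn z y) = lam q b * phi b y.
Proof.
have Hq0 : (0 < q)%N by apply: ltnW.
have qR : 1 < INR q by apply: lt_1_INR; apply/ltP.
have nR : 0 < INR n by apply: lt_0_INR; apply/ltP.
rewrite (eq_bigr (fun z => / (INR n * (INR q - 1)) *
   \big[Rplus/0]_j (phi b z * \big[Rmult/1]_i E (i == j) (z i) (y i)))); last first.
  by move=> z _; rewrite pn_eq -big_distrr /=; ring.
rewrite -big_distrr /= exchange_big /=.
rewrite (eq_bigr (fun j => (if b j then -1 else INR q - 1) * phi b y)).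
  rewrite -big_distrl /= sum_ite_b /lam; field; lra.
move=> j _.
rewrite (eq_bigr (fun z : X n q => \big[Rmult/1]_i (G (b i) (z i) * E (i == j) (z i) (y i)))); last first.
  by move=> z _; rewrite big_split.
rewrite -(bigA_distr_bigA (fun i a => G (b i) a * E (i == j) a (y i))).
rewrite (bigD1 j) //= eqxx.
rewrite (eq_bigr (fun i => G (b i) (y i))); last first.
  move=> i Hi; rewrite (negbTE Hi) /E.
  rewrite (eq_bigr (fun a => if a == y i then G (b i) a else 0)) ?sum_ind //.
  by move=> a _; case: eqP => _; ring.
rewrite (eq_bigr (fun a => if a == y j then 0 else G (b j) a)); last first.
  by move=> a _; rewrite /E; case: eqP => _; ring.
have -> : phi b y = G (b j) (y j) * \big[Rmult/1]_(i | i != j) G (b i) (y i).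
  by rewrite /phi (bigD1 j).
rewrite sum_comp (sum_G Hq0).
by case: (b j); rewrite /G /=; ring.
Qed.

Lemma nu_formula n q (Hq : (0 < q)%N) (Hq1 : (1 < q)%N) (Hn : (0 < n)%N) k (y : X n q) :
  nu Hq k y = / INR q ^ n * \big[Rplus/0]_(b : {ffun 'I_n -> bool}) (lam q b ^ k * phi b y).
Proof.
have qR : 1 < INR q by apply: lt_1_INR; apply/ltP.
have qn : INR q ^ n <> 0 by apply: pow_nonzero; lra.
elim: k y => [|k IH] y.
  rewrite /nu /=.
  rewrite (eq_bigr (fun b : {ffun 'I_n -> bool} => \big[Rmult/1]_i G (b i) (y i))); last first.
    by move=> b _; rewrite /phi; ring.
  rewrite -(bigA_distr_bigA (fun i bb => G bb (y i))).
  rewrite (eq_bigr (fun i => gq (y i) + 1)); last by move=> i _; rewrite big_bool.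
  case: eqP => [<- | Hne].
    rewrite (eq_bigr (fun i => INR q)); last first.
      by move=> i _; rewrite ffunE /gq /=; ring.
    rewrite prod_const_R card_ord; field; exact: qn.
  case: (boolP [exists i, y i != Ordinal Hq]) => [/existsP [i Hi] | /existsPn H].
    rewrite (bigD1 i) //= (gq_eq Hq) (negbTE Hi); ring.
  exfalso; apply: Hne; apply/ffunP => i; rewrite ffunE.
  by have := H i; rewrite negbK => /eqP ->.
rewrite /nu /=.
rewrite (eq_bigr (fun z => / INR q ^ n *
   \big[Rplus/0]_(b : {ffun 'I_n -> bool}) (lam q b ^ k * (phi b z * pn z y)))); last first.
  move=> z _; rewrite /nu in IH; rewrite IH -RmA big_distrl /=; congr (_ * _).
  by apply: eq_bigr => b _; ring.
rewrite -big_distrr /= exchange_big /=; congr (_ * _).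
apply: eq_bigr => b _.
by rewrite -big_distrr /= eigen //=; ring.
Qed.

Lemma orth n q (Hq : (0 < q)%N) (b b' : {ffun 'I_n -> bool}) :
  \big[Rplus/0]_(y : X n q) (phi b y * phi b' y) =
  if b == b' then \big[Rmult/1]_i (if b i then INR q * (INR q - 1) else INR q) else 0.
Proof.
rewrite (eq_bigr (fun y : X n q => \big[Rmult/1]_i (G (b i) (y i) * G (b' i) (y i)))); last first.
  by move=> y _; rewrite /phi big_split.
rewrite -(bigA_distr_bigA (fun i a => G (b i) a * G (b' i) a)).
rewrite (eq_bigr _ (fun i _ => sum_GG Hq (b i) (b' i))).
case: eqP => [<- | Hne].
  by apply: eq_bigr => i _; case: (b i).
case: (boolP [exists i, b i != b' i]) => [/existsP [i Hi] | /existsPn H].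
  rewrite (bigD1 i) //=.
  by move: Hi; case: (b i); case: (b' i) => //= _; ring.
exfalso; apply: Hne; apply/ffunP => i.
by have := H i; rewrite negbK => /eqP.
Qed.

Lemma exp_le x y : x <= y -> exp x <= exp y.
Proof. move=> H; case: (Rle_lt_or_eq_dec _ _ H) => [h|->]; [left; exact: exp_increasing | lra]. Qed.

Lemma exp_powR x m : exp (INR m * x) = exp x ^ m.
Proof. elim: m => [|m IH]; first by rewrite /= Rmult_0_l exp_0.
rewrite S_INR Rmult_plus_distr_r Rmult_1_l exp_plus IH /=; ring. Qed.

Lemma exp54 : exp (5/4) <= 4.
Proof.
have h1 : exp (5/4) ^ 4 = exp 1 ^ 5.
  by rewrite -!exp_powR; f_equal; simpl; field.
have h2 : exp 1 ^ 5 <= 3 ^ 5 by apply: pow_incr; split; [left; apply: exp_pos | apply: exp_le_3].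
case: (Rle_or_lt (exp (5/4)) 4) => // h.
have : 4 ^ 4 <= exp (5/4) ^ 4 by apply: pow_incr; lra.
simpl in *; lra.
Qed.

Lemma step1 (q t : R) : 5 <= q -> 0 <= t -> t * (q - 1) <= q -> (1 - t) * (1 - t) <= exp (- (2 * t)).
Proof.
move=> hq ht0 ht1.
have -> : exp (- (2 * t)) = exp (- t) * exp (- t) by rewrite -exp_plus; f_equal; ring.
have e0 := exp_pos (- t).
case: (Rle_or_lt t 1) => h.
  have := exp_ineq1_le (- t); nra.
have H := ht1.
have hq1 : t <= 5 / 4 by nra.
have ht2 : t - 1 <= 1 / 4 by nra.
have : / 4 <= exp (- t).
  apply: Rle_trans (@exp_le (- (5/4)) (- t) ltac:(lra)).
  rewrite exp_Ropp; apply: Rinv_le_contravar; [apply: exp_pos | apply: exp54].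
nra.
Qed.

Lemma key (q n k w : nat) c (hq : 5 <= INR q) (hn : 1 <= INR n) (hw : INR w <= INR n)
  (hk : INR k = INR n * (INR q - 1) / (2 * INR q) * (ln (INR n * (INR q - 1)) + c)) :
  ((1 - INR w * INR q / (INR n * (INR q - 1))) ^ k * (1 - INR w * INR q / (INR n * (INR q - 1))) ^ k)
   * (INR q - 1) ^ w <= (exp (- c) / INR n) ^ w.
Proof.
set t := INR w * INR q / (INR n * (INR q - 1)).
have w0 := pos_INR w.
have ht0 : 0 <= t by rewrite /t; apply: Rmult_le_pos; [nra | left; apply: Rinv_0_lt_compat; nra].
have ht1 : t * (INR q - 1) <= INR q.
  have -> : t * (INR q - 1) = INR q - (INR n - INR w) * INR q / INR n by rewrite /t; field; lra.
  have : 0 <= (INR n - INR w) * INR q / INR n.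
    apply: Rmult_le_pos; [nra | left; apply: Rinv_0_lt_compat; lra].
  lra.
have h1 := @step1 (INR q) t hq ht0 ht1.
have h2 : (1 - t) ^ k * (1 - t) ^ k <= exp (INR k * (- (2 * t))).
  rewrite -Rpow_mult_distr exp_powR; apply: pow_incr; split; [exact: Rle_0_sqr | exact: h1].
have h3 : INR k * (- (2 * t)) = INR w * (- (ln (INR n * (INR q - 1))) + - c).
  rewrite hk /t; field; lra.
rewrite h3 exp_powR exp_plus exp_Ropp exp_ln in h2; last by nra.
have h4 := pow_le (INR q - 1) w ltac:(lra).
apply: Rle_trans (Rmult_le_compat_r _ _ _ h4 h2) _.
rewrite -Rpow_mult_distr; right; f_equal; field; lra.
Qed.

Lemma card_X n q : INR #|X n q| = INR q ^ n.
Proof. rewrite /X card_ffun !card_ord -pow_INR; f_equal; elim: n => //= n IH; by rewrite expnS IH. Qed.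

Lemma prod_ite n (b : {ffun 'I_n -> bool}) a :
  \big[Rmult/1]_i (if b i then a else 1) = a ^ wn b.
Proof.
rewrite -big_mkcond /=.
have -> : \big[Rmult/1]_(i | b i) a = \big[Rmult/1]_(i in [set i | b i]) a.
  by apply: eq_bigl => j; rewrite inE.
by rewrite prod_const_R.
Qed.

Lemma wn_le n (b : {ffun 'I_n -> bool}) : (wn b <= n)%N.
Proof. by have := max_card [set i | b i]; rewrite card_ord. Qed.

Lemma wn0 n : wn ([ffun => false] : {ffun 'I_n -> bool}) = 0%N.
Proof. rewrite /wn; apply/eqP; rewrite cards_eq0; apply/eqP/setP => i; by rewrite !inE ffunE. Qed.

Lemma phi0 n q (y : X n q) : phi ([ffun => false] : {ffun 'I_n -> bool}) y = 1.
Proof. by apply: big1 => i _; rewrite ffunE. Qed.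

Definition b0 n : {ffun 'I_n -> bool} := [ffun => false].

Definition Dsum n q (k : nat) (y : X n q) : R :=
  \big[Rplus/0]_(b | b != b0 n) (lam q b ^ k * phi b y).

Lemma lam0 n q : lam q (b0 n) = 1.
Proof. rewrite /lam /b0 wn0 /= /Rdiv; ring. Qed.

Lemma d_eq n q (Hq : (0 < q)%N) (Hq1 : (1 < q)%N) (Hn : (0 < n)%N) k (y : X n q) :
  nu Hq k y - pi_unif y = / INR q ^ n * Dsum k y.
Proof.
have qR : 1 < INR q by apply: lt_1_INR; apply/ltP.
have qn : INR q ^ n <> 0 by apply: pow_nonzero; lra.
rewrite nu_formula // (bigD1 (b0 n)) //= /pi_unif card_X lam0 phi0 pow1 /Dsum.
have E : forall a X Y : R, X = Y -> a * (1 * 1 + X) - a = a * Y by move=> a X Y ->; ring.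
apply: E; reflexivity.
Qed.

Lemma L1 n q (Hq : (0 < q)%N) k : \big[Rplus/0]_(y : X n q) Dsum k y = 0.
Proof.
rewrite /Dsum exchange_big /=; apply: big1 => b hb; rewrite -big_distrr /=.
have -> : \big[Rplus/0]_(y : X n q) phi b y = \big[Rplus/0]_(y : X n q) (phi b y * phi (b0 n) y).
  by apply: eq_bigr => y _; rewrite /b0 phi0; ring.
rewrite orth // (negbTE hb); ring.
Qed.

Lemma L2 n q (Hq : (0 < q)%N) k :
  \big[Rplus/0]_(y : X n q) (Dsum k y * Dsum k y) =
  INR q ^ n * \big[Rplus/0]_(b | b != b0 n) ((lam q b ^ k * lam q b ^ k) * (INR q - 1) ^ wn b).
Proof.
rewrite (eq_bigr (fun y : X n q => \big[Rplus/0]_(b | b != b0 n) \big[Rplus/0]_(b' | b' != b0 n)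
   ((lam q b ^ k * lam q b' ^ k) * (phi b y * phi b' y)))); last first.
  move=> y _; rewrite /Dsum big_distrl /=; apply: eq_bigr => b _.
  rewrite big_distrr /=; apply: eq_bigr => b' _; ring.
rewrite exchange_big /= big_distrr /=; apply: eq_bigr => b hb.
rewrite exchange_big /=.
rewrite (eq_bigr (fun b' => (lam q b ^ k * lam q b' ^ k) *
   (if b == b' then \big[Rmult/1]_i (if b i then INR q * (INR q - 1) else INR q) else 0))); last first.
  by move=> b' _; rewrite -big_distrr /= orth.
rewrite (bigD1 b) //= eqxx [X in _ + X = _]big1; last first.
  move=> b' /andP [_ hb']; rewrite eq_sym (negbTE hb'); ring.
rewrite (eq_bigr (fun i => INR q * (if b i then INR q - 1 else 1))); last first.
  by move=> i _; case: (b i); ring.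
rewrite big_split /= prod_const_R card_ord prod_ite; ring.
Qed.

Lemma sum_u n u : \big[Rplus/0]_(b | b != b0 n) u ^ wn b = (1 + u) ^ n - 1.
Proof.
have H : \big[Rplus/0]_(b : {ffun 'I_n -> bool}) u ^ wn b = (1 + u) ^ n.
  rewrite (eq_bigr (fun b : {ffun 'I_n -> bool} => \big[Rmult/1]_i (if b i then u else 1))); last first.
    by move=> b _; rewrite prod_ite.
  rewrite -(bigA_distr_bigA (fun i (bb : bool) => if bb then u else 1)).
  rewrite (eq_bigr (fun _ => 1 + u)); last by move=> i _; rewrite big_bool /=; ring.
  by rewrite prod_const_R card_ord.
rewrite (bigD1 (b0 n)) //= (_ : wn (b0 n) = 0%N) ?wn0 //= in H.
have E : forall a X Y Z : R, a + X = Z -> X = Y -> Y = Z - a by move=> a X Y Z <- <-; ring.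
apply: (E _ _ _ _ H); reflexivity.
Qed.

Lemma sum_constT (T : finType) c : \big[Rplus/0]_(i : T) c = INR #|T| * c.
Proof. rewrite -sum1_R big_distrl /=; apply: eq_bigr => i _; ring. Qed.

Lemma CS (T : finType) (a : T -> R) :
  (\big[Rplus/0]_x a x) * (\big[Rplus/0]_x a x) <= INR #|T| * \big[Rplus/0]_x (a x * a x).
Proof.
set S := \big[Rplus/0]_x a x.
set Q := \big[Rplus/0]_x (a x * a x).
have H0 : 0 <= \big[Rplus/0]_x \big[Rplus/0]_y ((a x - a y) * (a x - a y)).
  apply: big_ind; [lra | move=> *; lra | move=> x _].
  apply: big_ind; [lra | move=> *; lra | move=> y _; exact: Rle_0_sqr].
have H1 : \big[Rplus/0]_x \big[Rplus/0]_y ((a x - a y) * (a x - a y)) =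
   \big[Rplus/0]_(x : T) (INR #|T| * (a x * a x) + Q + (-2 * a x) * S).
  apply: eq_bigr => x _.
  rewrite (eq_bigr (fun y => (a x * a x + a y * a y) + (-2 * a x) * a y)); last by move=> *; ring.
  rewrite big_split big_split /= sum_constT -/Q -big_distrr /= -/S; ring.
rewrite H1 !big_split /= -!big_distrr -big_distrl /= sum_constT -/Q -/S in H0.
rewrite -big_distrr /= -/S in H0.
clearbody S Q.
have HN : forall N1 N2 : R, N1 = N2 -> 0 <= N1 * Q + N1 * Q + -2 * S * S -> S * S <= N2 * Q by move=> N1 N2 -> h; nra.
apply: (HN _ _ _ H0); reflexivity.
Qed.

Lemma abs_sum (T : finType) (P : pred T) (d : T -> R) :
  Rabs (\big[Rplus/0]_(x | P x) d x) <= \big[Rplus/0]_(x | P x) Rabs (d x).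
Proof.
apply: (big_ind2 (fun a b => Rabs a <= b)).
- rewrite Rabs_R0; lra.
- move=> a b c e h1 h2; apply: Rle_trans (Rabs_triang _ _) _; lra.
- move=> *; lra.
Qed.

Lemma TVterm (T : finType) (d : T -> R) (S : {set T}) :
  \big[Rplus/0]_x d x = 0 ->
  4 * (Rabs (\big[Rplus/0]_(x in S) d x) * Rabs (\big[Rplus/0]_(x in S) d x))
    <= INR #|T| * \big[Rplus/0]_x (d x * d x).
Proof.
move=> h0.
have hCS : (\big[Rplus/0]_x Rabs (d x)) * (\big[Rplus/0]_x Rabs (d x)) <=
    INR #|T| * \big[Rplus/0]_x (d x * d x).
  have := CS (fun x => Rabs (d x)).
  rewrite [X in _ <= _ * X -> _](eq_bigr (fun x => d x * d x)) //.
  by move=> x _ /=; rewrite -Rabs_mult Rabs_pos_eq //; exact: Rle_0_sqr.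
rewrite (bigID (fun x => x \in S)) /= in h0.
rewrite (bigID (fun x => x \in S)) /= in hCS.
have h1 := abs_sum (fun x => x \in S) d.
have h2 := abs_sum (fun x => x \notin S) d.
move: h0 hCS h1 h2.
set A := \big[Rplus/0]_(x | x \in S) d x.
set B := \big[Rplus/0]_(x | x \notin S) d x.
set M1 := \big[Rplus/0]_(x | x \in S) Rabs (d x).
set M2 := \big[Rplus/0]_(x | x \notin S) Rabs (d x).
move=> h0 hCS h1 h2.
have hB : B = - A by lra.
rewrite hB Rabs_Ropp in h2.
have hA0 := Rabs_pos A.
clearbody A B M1 M2.
have HN : forall N1 N2 Q : R, N1 = N2 -> (M1 + M2) * (M1 + M2) <= N1 * Q ->
   4 * (Rabs A * Rabs A) <= N2 * Q by move=> N1 N2 Q -> h; nra.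
apply: (HN _ _ _ _ hCS); reflexivity.
Qed.

Unset Implicit Arguments.

Theorem theorem1p1 (q n : nat) (c : R) (k : nat)
  (hq : (5 <= q)%N) (hn : (1 <= n)%N) (hc : 0 < c)
  (hk : INR k = INR n * (INR q - 1) / (2 * INR q) * (ln (INR n * (INR q - 1)) + c)) :
  TV (@nu n q (leq_trans (isT : (0 < 5)%N) hq) k) (@pi_unif n q) ^ 2
     <= / 4 * (exp (exp (- c)) - 1).
Proof.
generalize (leq_trans (isT : (0 < 5)%N) hq) => Hq.
have Hq1 : (1 < q)%N by apply: leq_trans hq.
have qR5 : 5 <= INR q by have := le_INR 5 q (elimT leP hq); simpl; lra.
have nR1 : 1 <= INR n by have := le_INR 1 n (elimT leP hn); simpl; lra.
have Npos : 0 < INR q ^ n by apply: pow_lt; lra.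
set N := INR q ^ n in Npos.
set Rb := exp (exp (- c)) - 1.
set d := fun y : X n q => nu Hq k y - pi_unif y.
have hd : forall y, d y = / N * Dsum k y by move=> y; rewrite /d d_eq.
have hsum : \big[Rplus/0]_(y : X n q) d y = 0.
  by rewrite (eq_bigr _ (fun y _ => hd y)) -big_distrr /= L1 //; ring.
have hsq : INR #|X n q| * \big[Rplus/0]_(y : X n q) (d y * d y) <= Rb.
  rewrite card_X -/N.
  rewrite (eq_bigr (fun y => / N * / N * (Dsum k y * Dsum k y))); last first.
    by move=> y _; rewrite hd; ring.
  rewrite -big_distrr /= L2 // -/N.
  set S := \big[Rplus/0]_(b | b != b0 n) _.
  have -> : N * (/ N * / N * (N * S)) = S by field; lra.
  have hS : S <= \big[Rplus/0]_(b | b != b0 n) (exp (- c) / INR n) ^ wn b.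
    apply: (big_ind2 (fun a b => a <= b)); [lra | move=> *; lra | move=> b _].
    apply: key => //; apply: le_INR; apply/leP; exact: wn_le.
  rewrite sum_u in hS.
  have hu : 0 <= exp (- c) / INR n by apply: Rmult_le_pos; [left; apply: exp_pos | left; apply: Rinv_0_lt_compat; lra].
  have : (1 + exp (- c) / INR n) ^ n <= exp (exp (- c) / INR n) ^ n.
    apply: pow_incr; split; [lra | apply: exp_ineq1_le].
  rewrite -exp_powR (_ : INR n * (exp (- c) / INR n) = exp (- c)); last by field; lra.
  rewrite /Rb; lra.
have Rb0 : 0 <= Rb.
  rewrite /Rb; have := exp_ineq1_le (exp (- c)); have := exp_pos (- c); lra.
suff [h0 h4] : 0 <= TV (nu Hq k) (@pi_unif n q) /\ 4 * (TV (nu Hq k) (@pi_unif n q) * TV (nu Hq k) (@pi_unif n q)) <= Rb.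
  simpl; lra.
rewrite /TV.
apply: (big_ind (fun v => 0 <= v /\ 4 * (v * v) <= Rb)).
- split; lra.
- move=> x y [hx0 hx] [hy0 hy]; rewrite /Rmax; case: Rle_dec => _; split => //.
- move=> S _; split; first exact: Rabs_pos.
  have -> : meas (nu Hq k) S - meas (@pi_unif n q) S = \big[Rplus/0]_(x in S) d x.
    rewrite /meas (eq_bigr (fun x => d x + pi_unif x)); last by move=> x _; rewrite /d; ring.
    rewrite big_split /=; ring.
  apply: Rle_trans (TVterm S hsum) hsq.
Qed.
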